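(* For any single-player extensive-form game $\Gamma$, $$\mathrm{VoR}^{\mathrm{opt}}(\Gamma)=\mathrm{VoR}^{\mathrm{bEDT}}(\Gamma)=\mathrm{VoR}^{\mathrm{bCDT}}(\Gamma)\ge 1.$$
   Context: A single-player extensive-form game consists of a finite rooted tree (nodes $\mathcal H$, leaves $\mathcal Z$, actions $A_h$), nonterminal nodes belonging to Player 1 or to chance (chance having fixed action distributions), utility $u_1:\mathcal Z\to\mathbb R_{\ge0}$, and a partition $\mathcal I_1$ of Player 1's nodes into infosets with common action sets $A_I$. A behavioral strategy $\pi$ assigns $\pi(\cdot\mid I)\in\Delta(A_I)$ to each infoset; $U_1(\pi)=\sum_z\mathbb P(z\mid\pi)u_1(z)$, with $\mathbb P(z\mid\pi)$ the reach probability. $u_1(\mathrm{opt}(\Gamma))=\max_\pi U_1(\pi)$. $\pi^{I\mapsto\sigma}$ plays $\sigma$ at $I$ and as $\pi$ elsewhere. $\pi$ is an EDT equilibrium if for all $I$, $\pi(\cdot\mid I)\in\arg\max_{\sigma\in\Delta(A_I)}U_1(\pi^{I\mapsto\sigma})$; a CDT equilibrium if $\pi$ is a Karush–Kuhn–Tucker point of maximizing $U_1$ over $\prod_I\Delta(A_I)$. $u_1(\mathrm{bEDT}(\Gamma))$, $u_1(\mathrm{bCDT}(\Gamma))$ are the maxima of $U_1$ over EDT resp. CDT equilibria. For a node $h$, $\mathrm{obs}_1(h)$ is the sequence of (infoset, action) pairs at Player 1's nodes on the root-to-$h$ path (excluding $h$); $\mathrm{pr}_1(\Gamma)$ has the same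 tree and utilities, with each infoset partitioned into the classes of $h\sim h'\iff\mathrm{obs}_1(h)=\mathrm{obs}_1(h')$. $\mathrm{VoR}^{\mathrm{SC}}(\Gamma)=u_1(\mathrm{SC}(\mathrm{pr}_1(\Gamma)))/u_1(\mathrm{SC}(\Gamma))$. *)

(* Defs.v *)
From HB Require Import structures.
From mathcomp Require Import all_boot all_order all_algebra.
From mathcomp Require Import boolp classical_sets reals topology normedtype derive.
Set Implicit Arguments. Unset Strict Implicit. Unset Printing Implicit Defensive.
Import Order.TTheory GRing.Theory Num.Theory numFieldNormedType.Exports.
Local Open Scope ring_scope.
Local Open Scope classical_set_scope.

(* A finite rooted game tree for a single-player extensive-form game.
   - [Leaf u]      : a leaf with utility u for Player 1;
   - [PNode In ch]  : a Player-1 node in infoset (label) In; its actions are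
                     0, ..., size ch - 1, action k leading to the k-th child;
   - [CNode ch]    : a chance node; ch lists (probability, child) pairs.
   Infosets are the classes of Player-1 nodes carrying the same label. *)
Inductive tree (R L : Type) :=
| Leaf of R
| PNode of L & seq (tree R L)
| CNode of seq (R * tree R L).
Arguments Leaf {R L}.
Arguments PNode {R L}.
Arguments CNode {R L}.

Section Game.
Variable R : realType.

Fixpoint wf_tree (L : Type) (nA : L -> nat) (t : tree R L) : Prop :=
  match t with
  | Leaf u => 0 <= u
  | PNode In ch => size ch = nA In /\
      (fix go (l : seq (tree R L)) : Prop :=
         match l with [::] => True | c :: l' => wf_tree nA c /\ go l' end) ch
  | CNode ch => \sum_(pc <- ch) pc.1 = 1 /\
      (fix go (l : seq (R * tree R L)) : Prop :=
         match l with [::] => True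
         | (p, c) :: l' => 0 <= p /\ wf_tree nA c /\ go l' end) ch
  end.

(* behavioral strategy (as an arbitrary real assignment; see is_strategy) *)
Definition strat (L : Type) := L -> nat -> R.

(* leaves of the tree, each paired with its reach probability P(z | pi):
   the list of (P(z|pi), u_1(z)) *)
Fixpoint leaves (L : Type) (pi : strat L) (t : tree R L) : seq (R * R) :=
  match t with
  | Leaf u => [:: (1, u)]
  | PNode In ch =>
      (fix go (k : nat) (l : seq (tree R L)) : seq (R * R) :=
         match l with
         | [::] => [::]
         | c :: l' => [seq (pi In k * z.1, z.2) | z <- leaves pi c] ++ go k.+1 l'
         end) 0%N ch
  | CNode ch =>
      (fix go (l : seq (R * tree R L)) : seq (R * R) :=
         match l with
         | [::] => [::]
         | (p, c) :: l' => [seq (p * z.1, z.2) | z <- leaves pi c] ++ go l'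
         end) ch
  end.

Definition U (L : Type) (t : tree R L) (pi : strat L) : R :=
  \sum_(z <- leaves pi t) z.1 * z.2.

Definition is_dist (n : nat) (s : nat -> R) : Prop :=
  (forall a, (a < n)%N -> 0 <= s a) /\ \sum_(a < n) s a = 1.

Definition is_strategy (L : Type) (nA : L -> nat) (pi : strat L) : Prop :=
  forall I, is_dist (nA I) (pi I).

Definition upd (L : eqType) (pi : strat L) (I : L) (s : nat -> R) : strat L :=
  fun J => if J == I then s else pi J.

Definition upd_coord (L : eqType) (pi : strat L) (I : L) (a : nat) (x : R)
  : strat L :=
  fun J b => if (J == I) && (b == a) then x else pi J b.

Definition EDT_eq (L : eqType) (nA : L -> nat) (t : tree R L) (pi : strat L)
  : Prop :=
  is_strategy nA pi /\
  forall I (s : nat -> R), is_dist (nA I) s ->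
    U t (upd pi I s) <= U t (upd pi I (pi I)).

Definition dU (L : eqType) (t : tree R L) (pi : strat L) (I : L) (a : nat) : R :=
  @derive1 R R^o (fun x : R => (U t (upd_coord pi I a x) : R^o)) (pi I a).

(* KKT point of  max U_1  over  prod_I Delta(A_I)
   (constraints: pi(a|I) >= 0, sum_a pi(a|I) = 1) *)
Definition CDT_eq (L : eqType) (nA : L -> nat) (t : tree R L) (pi : strat L)
  : Prop :=
  is_strategy nA pi /\
  exists (lam : L -> R) (mu : L -> nat -> R),
    forall I a, (a < nA I)%N ->
      [/\ 0 <= mu I a, mu I a * pi I a = 0 &
          dU t pi I a + mu I a - lam I = 0].

Definition val (L : Type) (SC : strat L -> Prop) (t : tree R L) : R :=
  sup [set x : R | exists pi, SC pi /\ x = U t pi].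

Definition opt_val (L : eqType) (nA : L -> nat) (t : tree R L) : R :=
  val (is_strategy nA) t.
Definition bEDT_val (L : eqType) (nA : L -> nat) (t : tree R L) : R :=
  val (EDT_eq nA t) t.
Definition bCDT_val (L : eqType) (nA : L -> nat) (t : tree R L) : R :=
  val (CDT_eq nA t) t.

(* pr_1: same tree and utilities; each Player-1 node in infoset I with
   observation history o = obs_1(h) is put in the refined infoset (I, o). *)
Fixpoint pr1_aux (L : Type) (o : seq (L * nat)) (t : tree R L)
  : tree R (L * seq (L * nat)) :=
  match t with
  | Leaf u => Leaf u
  | PNode In ch =>
      PNode (In, o)
        ((fix go (k : nat) (l : seq (tree R L)) :=
            match l with
            | [::] => [::]
            | c :: l' => pr1_aux (rcons o (In, k)) c :: go k.+1 l'
            end) 0%N ch)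
  | CNode ch =>
      CNode ((fix go (l : seq (R * tree R L)) :=
                match l with
                | [::] => [::]
                | (p, c) :: l' => (p, pr1_aux o c) :: go l'
                end) ch)
  end.

Definition pr1 (L : Type) (t : tree R L) := pr1_aux [::] t.
Definition pr1_nA (L : Type) (nA : L -> nat) : L * seq (L * nat) -> nat :=
  fun J => nA J.1.

Definition VoR_opt (L : eqType) (nA : L -> nat) (t : tree R L) : R :=
  opt_val (pr1_nA nA) (pr1 t) / opt_val nA t.
Definition VoR_bEDT (L : eqType) (nA : L -> nat) (t : tree R L) : R :=
  bEDT_val (pr1_nA nA) (pr1 t) / bEDT_val nA t.
Definition VoR_bCDT (L : eqType) (nA : L -> nat) (t : tree R L) : R :=
  bCDT_val (pr1_nA nA) (pr1 t) / bCDT_val nA t.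

End Game.

(* Main.v *)
Require Import Defs.
From HB Require Import structures.
From mathcomp Require Import all_boot all_order all_algebra.
From mathcomp Require Import boolp classical_sets reals topology normedtype derive.
From mathcomp Require Import ring lra zify.
Set Implicit Arguments. Unset Strict Implicit. Unset Printing Implicit Defensive.
Import Order.TTheory GRing.Theory Num.Theory.
Local Open Scope ring_scope.

Module Part1.
Import numFieldNormedType.Exports.
Local Open Scope ring_scope.

Fixpoint FA {T : Type} (P : T -> Prop) (l : seq T) : Prop :=
  match l with [::] => True | c :: l' => P c /\ FA P l' end.

Section TI.
Variables (R : Type) (L : Type) (P : tree R L -> Prop).
Hypotheses (HL : forall u, P (Leaf u))
  (HP : forall In ch, FA P ch -> P (PNode In ch))
  (HC : forall ch, FA (fun pc => P pc.2) ch -> P (CNode ch)).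
Fixpoint tree_ind2 (t : tree R L) : P t :=
  match t with
  | Leaf u => HL u
  | PNode In ch => HP In ((fix go (l : seq (tree R L)) : FA P l :=
        match l with [::] => I | c :: l' => conj (tree_ind2 c) (go l') end) ch)
  | CNode ch => HC ((fix go (l : seq (R * tree R L)) : FA (fun pc => P pc.2) l :=
        match l with [::] => I | (p, c) :: l' => conj (tree_ind2 c) (go l') end) ch)
  end.
End TI.

Section G.
Variable R : realType.
Variable L : eqType.
Implicit Types (pi : strat R L) (t : tree R L).

Fixpoint Uval pi t : R :=
  match t with
  | Leaf u => u
  | PNode In ch => (fix go (k : nat) (l : seq (tree R L)) : R := match l with [::] => 0
        | c :: l' => pi In k * Uval pi c + go k.+1 l' end) 0%N ch
  | CNode ch => (fix go (l : seq (R * tree R L)) : R := match l with [::] => 0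
        | (p, c) :: l' => p * Uval pi c + go l' end) ch
  end.

Definition UvP pi In := (fix go (k : nat) (l : seq (tree R L)) : R := match l with [::] => 0
        | c :: l' => pi In k * Uval pi c + go k.+1 l' end).
Definition UvC pi := (fix go (l : seq (R * tree R L)) : R := match l with [::] => 0
        | (p, c) :: l' => p * Uval pi c + go l' end).
Lemma UvalP pi In ch : Uval pi (PNode In ch) = UvP pi In 0%N ch. Proof. by []. Qed.
Lemma UvalC pi ch : Uval pi (CNode ch) = UvC pi ch. Proof. by []. Qed.

Definition leavesP pi In := (fix go (k : nat) (l : seq (tree R L)) : seq (R * R) :=
         match l with
         | [::] => [::]
         | c :: l' => [seq (pi In k * z.1, z.2) | z <- leaves pi c] ++ go k.+1 l'
         end).
Definition leavesC pi := (fix go (l : seq (R * tree R L)) : seq (R * R) :=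
         match l with
         | [::] => [::]
         | (p, c) :: l' => [seq (p * z.1, z.2) | z <- leaves pi c] ++ go l'
         end).
Lemma leavesPE pi In ch : leaves pi (PNode In ch) = leavesP pi In 0%N ch. Proof. by []. Qed.
Lemma leavesCE pi ch : leaves pi (CNode ch) = leavesC pi ch. Proof. by []. Qed.

Lemma sum_scale (p : R) (s : seq (R * R)) :
  \sum_(z <- [seq (p * z.1, z.2) | z <- s]) z.1 * z.2 = p * \sum_(z <- s) z.1 * z.2.
Proof. by rewrite big_map mulr_sumr; apply: eq_bigr => z _ /=; rewrite mulrA. Qed.

Lemma U_Uval t pi : U t pi = Uval pi t.
Proof.
rewrite /U; elim/tree_ind2: t => [u|In ch IH|ch IH].
- by rewrite /= big_seq1 mul1r.
- rewrite leavesPE UvalP; elim: ch 0%N IH => [|c l IHl] k /=; first by rewrite big_nil.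
  by case=> IHc IH; rewrite big_cat sum_scale IHc IHl.
- rewrite leavesCE UvalC; elim: ch IH => [|[p c] l IHl] /=; first by rewrite big_nil.
  by case=> IHc IH; rewrite big_cat sum_scale IHc IHl.
Qed.


Definition wfP (nA : L -> nat) := (fix go (l : seq (tree R L)) : Prop :=
         match l with [::] => True | c :: l' => wf_tree nA c /\ go l' end).
Definition wfC (nA : L -> nat) := (fix go (l : seq (R * tree R L)) : Prop :=
         match l with [::] => True
         | (p, c) :: l' => 0 <= p /\ wf_tree nA c /\ go l' end).
Lemma wfPE nA In ch : wf_tree nA (PNode In ch) = (size ch = nA In /\ wfP nA ch).
Proof. by []. Qed.
Lemma wfCE nA ch : wf_tree nA (CNode ch) = (\sum_(pc <- ch) pc.1 = 1 /\ wfC nA ch).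
Proof. by []. Qed.

Fixpoint labs t : seq L :=
  match t with
  | Leaf _ => [::]
  | PNode In ch => In :: (fix go (l : seq (tree R L)) : seq L :=
        match l with [::] => [::] | c :: l' => labs c ++ go l' end) ch
  | CNode ch => (fix go (l : seq (R * tree R L)) : seq L :=
        match l with [::] => [::] | (p, c) :: l' => labs c ++ go l' end) ch
  end.
Definition labsP := (fix go (l : seq (tree R L)) : seq L :=
        match l with [::] => [::] | c :: l' => labs c ++ go l' end).
Definition labsC := (fix go (l : seq (R * tree R L)) : seq L :=
        match l with [::] => [::] | (p, c) :: l' => labs c ++ go l' end).
Lemma labsPE In ch : labs (PNode In ch) = In :: labsP ch. Proof. by []. Qed.
Lemma labsCE ch : labs (CNode ch) = labsC ch. Proof. by []. Qed.

Lemma Uval_agree (nA : L -> nat) t pi pi' : wf_tree nA t ->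
  (forall I, I \in labs t -> forall a, (a < nA I)%N -> pi I a = pi' I a) ->
  Uval pi t = Uval pi' t.
Proof.
elim/tree_ind2: t => [u|In ch IH|ch IH] //.
- rewrite wfPE labsPE !UvalP => -[hs hw] H.
  have HI : forall a, (0 <= a < 0 + size ch)%N -> pi In a = pi' In a.
    by move=> a /andP[_ ha]; apply: H; [rewrite mem_head | rewrite -hs].
  have HL : forall I, I \in labsP ch -> forall a, (a < nA I)%N -> pi I a = pi' I a.
    by move=> I hI; apply: H; rewrite in_cons hI orbT.
  clear H hs; elim: ch 0%N IH hw HL HI => [|c l IHl] k //= [IHc IH] [hc hw] HL HI.
  rewrite (HI k) ?leqnn ?addnS ?ltnS ?leq_addr //.
  rewrite (IHc hc); last by move=> I hI; apply: HL; rewrite mem_cat hI.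
  congr (_ + _); apply: IHl => //.
    by move=> I hI; apply: HL; rewrite mem_cat hI orbT.
  by move=> a /andP[ha hb]; apply: HI; rewrite (ltnW ha) /= -addSnnS hb.
- rewrite wfCE labsCE !UvalC => -[_ hw] H.
  elim: ch IH hw H => [|[p c] l IHl] //= [IHc IH] [_ [hc hw]] H.
  rewrite (IHc hc); last by move=> I hI; apply: H; rewrite mem_cat hI.
  congr (_ + _); apply: IHl => // I hI; apply: H; by rewrite mem_cat hI orbT.
Qed.

End G.

Section PR.
Variable R : realType.
Variable L : eqType.

Definition pr1P (o : seq (L * nat)) (In : L) := (fix go (k : nat) (l : seq (tree R L)) :=
            match l with
            | [::] => [::]
            | c :: l' => pr1_aux (rcons o (In, k)) c :: go k.+1 l'
            end).
Definition pr1C (o : seq (L * nat)) := (fix go (l : seq (R * tree R L)) :=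
                match l with
                | [::] => [::]
                | (p, c) :: l' => (p, pr1_aux o c) :: go l'
                end).
Lemma pr1PE o In ch : pr1_aux o (PNode In ch) = PNode (In, o) (pr1P o In 0%N ch).
Proof. by []. Qed.
Lemma pr1CE o ch : pr1_aux o (CNode ch) = CNode (pr1C o ch).
Proof. by []. Qed.

Lemma Uval_pr1 (t : tree R L) o (pi : strat R L) :
  Uval (fun J => pi J.1) (pr1_aux o t) = Uval pi t.
Proof.
elim/tree_ind2: t o => [u|In ch IH|ch IH] o //.
- rewrite pr1PE !UvalP; elim: ch 0%N IH => [|c l IHl] k //= [IHc IH].
  by rewrite IHc IHl.
- rewrite pr1CE !UvalC; elim: ch IH => [|[p c] l IHl] //= [IHc IH].
  by rewrite IHc IHl.
Qed.

Lemma wf_pr1 (nA : L -> nat) (t : tree R L) o :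
  wf_tree nA t -> wf_tree (pr1_nA nA) (pr1_aux o t).
Proof.
elim/tree_ind2: t o => [u|In ch IH|ch IH] o //.
- rewrite pr1PE !wfPE /pr1_nA /= => -[<- hw]; split.
    by elim: ch 0%N {IH hw} => [|c l IHl] k //=; rewrite IHl.
  by elim: ch 0%N IH hw => [|c l IHl] k //= [IHc IH] [hc hw]; split; [apply: IHc|apply: IHl].
- rewrite pr1CE !wfCE => -[hs hw]; split.
    rewrite -hs; elim: ch {IH hw hs} => [|[p c] l IHl] /=; first by rewrite !big_nil.
    by rewrite !big_cons IHl.
  by elim: ch IH hw {hs} => [|[p c] l IHl] //= [IHc IH] [hp [hc hw]]; split; [|split; [apply: IHc|apply: IHl]].
Qed.
End PR.

End Part1.
Import Part1.

Module Part2.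
Import numFieldNormedType.Exports.
Local Open Scope ring_scope.

Section D.
Variable R : realType.
Variable L : eqType.
Implicit Types (pi : strat R L) (t : tree R L).

Fixpoint DD pi (be : strat R L) t : R :=
  match t with
  | Leaf u => 0
  | PNode In ch => (fix go (k : nat) (l : seq (tree R L)) : R := match l with [::] => 0
        | c :: l' => (be In k * Uval pi c + pi In k * DD pi be c) + go k.+1 l' end) 0%N ch
  | CNode ch => (fix go (l : seq (R * tree R L)) : R := match l with [::] => 0
        | (p, c) :: l' => p * DD pi be c + go l' end) ch
  end.
Definition DDP pi be In := (fix go (k : nat) (l : seq (tree R L)) : R := match l with [::] => 0
        | c :: l' => (be In k * Uval pi c + pi In k * DD pi be c) + go k.+1 l' end).
Definition DDC pi be := (fix go (l : seq (R * tree R L)) : R := match l with [::] => 0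
        | (p, c) :: l' => p * DD pi be c + go l' end).
Lemma DDPE pi be In ch : DD pi be (PNode In ch) = DDP pi be In 0%N ch. Proof. by []. Qed.
Lemma DDCE pi be ch : DD pi be (CNode ch) = DDC pi be ch. Proof. by []. Qed.

Lemma is_derive_aff (x0 a b : R) : is_derive x0 (1 : R) (fun x : R => a + x * b) b.
Proof.
apply: is_derive_eq (is_deriveD (is_derive_cst a x0 1) (is_deriveM (is_derive_id x0 1) (is_derive_cst b x0 1))) _.
by rewrite scaler0 add0r /GRing.scale /= mulr1 add0r.
Qed.

Definition saff (al be : strat R L) (x : R) : strat R L := fun J b => al J b + x * be J b.

Lemma Uval_derive t al be x0 :
  is_derive x0 (1 : R) (fun x : R => Uval (saff al be x) t) (DD (saff al be x0) be t).
Proof.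
elim/tree_ind2: t => [u|In ch IH|ch IH].
- exact: is_derive_cst.
- rewrite DDPE.
  suff H : forall k, is_derive x0 (1 : R) (fun x : R => UvP (saff al be x) In k ch)
      (DDP (saff al be x0) be In k ch) by exact: H.
  elim: ch IH => [|c l IHl] /=; first by move=> _ k; exact: is_derive_cst.
  case=> IHc IH k.
  + have H1 := is_deriveM (is_derive_aff x0 (al In k) (be In k)) IHc.
    have H2 := is_deriveD H1 (IHl IH k.+1).
    apply: is_derive_eq H2 _.
    by rewrite /GRing.scale /=; congr (_ + _); rewrite addrC [Uval _ c * _]mulrC.
- rewrite DDCE.
  suff H : is_derive x0 (1 : R) (fun x : R => UvC (saff al be x) ch)
      (DDC (saff al be x0) be ch) by exact: H.
  elim: ch IH => [|[p c] l IHl] /=; first by move=> _; exact: is_derive_cst.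
  case=> IHc IH.
  + have H1 := is_deriveM (is_derive_cst p x0 1) IHc.
    have H2 := is_deriveD H1 (IHl IH).
    apply: is_derive_eq H2 _.
    by rewrite /GRing.scale /= mulr0 addr0.
Qed.


Lemma rmax_deriv (f : R -> R) (c d e : R) : 0 < e -> is_derive c (1 : R) f d ->
  (forall h, 0 < h < e -> f (h + c) <= f c) -> d <= 0.
Proof.
move=> e0 fd cmax.
have fdrvbl : derivable f c 1 by exact: ex_derive.
rewrite -(@derive_val _ _ _ _ _ _ _ fd).
rewrite ['D_1 f c]cvg_at_rightE; last exact: fdrvbl.
apply: limr_le.
  rewrite -(cvg_at_rightE (fun h : R => h^-1 *: ((f \o shift c) _ - f c))) //.
  apply: cvg_trans fdrvbl; apply: cvg_app.
  move=> A [r rgt0 Ar]; exists r => // x xe xgt0; apply: Ar => //.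
  exact/lt0r_neq0.
near=> h; apply: mulr_ge0_le0.
  by rewrite invr_ge0; apply: ltW; near: h; exists 1 => /=.
rewrite subr_le0 [_%:A]mulr1; apply: cmax; apply/andP; split.
  by near: h; exists 1 => /=.
near: h; exists e => //= h; rewrite /= distrC subr0 /=.
by move=> /(le_lt_trans (ler_norm _)).
Unshelve. all: by end_near. Qed.


Lemma DD_sub pi (b1 b2 : strat R L) t :
  DD pi (fun J b => b1 J b - b2 J b) t = DD pi b1 t - DD pi b2 t.
Proof.
elim/tree_ind2: t => [u|In ch IH|ch IH]; first by rewrite /= subr0.
- rewrite !DDPE; elim: ch 0%N IH => [|c l IHl] k /=; first by rewrite subr0.
  case=> IHc IH; rewrite IHc IHl //.
  rewrite mulrBl mulrBr; ring.
- rewrite !DDCE; elim: ch IH => [|[p c] l IHl] /=; first by rewrite subr0.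
  case=> IHc IH; rewrite IHc IHl //; rewrite mulrBr; ring.
Qed.

Definition ecoord (I : L) (a : nat) : strat R L :=
  fun J b => if (J == I) && (b == a) then 1 else 0.

Lemma dU_DD t pi I a : dU t pi I a = DD pi (ecoord I a) t.
Proof.
pose al : strat R L := fun J b => if (J == I) && (b == a) then 0 else pi J b.
have E : (fun x : R => (U t (upd_coord pi I a x) : R^o)) =
         (fun x : R => Uval (saff al (ecoord I a) x) t).
  apply/funext => x; rewrite U_Uval; congr Uval.
  apply/funext => J; apply/funext => b.
  rewrite /upd_coord /saff /al /ecoord; case: ifP => _; ring.
have E2 : saff al (ecoord I a) (pi I a) = pi.
  apply/funext => J; apply/funext => b.
  rewrite /saff /al /ecoord; case: ifP => [/andP[/eqP -> /eqP ->]|_]; ring.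
rewrite /dU E derive1E.
have := Uval_derive t al (ecoord I a) (pi I a).
by rewrite E2 => H; apply: (@derive_val _ _ _ _ _ _ _ H).
Qed.


Fixpoint mx (f : nat -> R) (n : nat) : R :=
  if n is n'.+1 then Order.max (mx f n') (f n) else f 0%N.
Lemma mx_ge f n a : (a <= n)%N -> f a <= mx f n.
Proof.
elim: n => [|n IH] /=; first by rewrite leqn0 => /eqP ->.
rewrite leq_eqVlt => /orP[/eqP ->|h]; first by rewrite le_max lexx orbT.
by rewrite le_max IH.
Qed.
Lemma mx_ex f n : exists2 m, (m <= n)%N & mx f n = f m.
Proof.
elim: n => [|n [m hm IH]] /=; first by exists 0%N.
case: (leP (mx f n) (f n.+1)) => h.
- by exists n.+1.
- by exists m => //; exact: leqW.
Qed.

Lemma sum_ecoord (n m : nat) : (m < n)%N ->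
  \sum_(b < n) (if b == m :> nat then 1 else 0 : R) = 1.
Proof.
move=> hm; rewrite (bigD1 (Ordinal hm)) //= eqxx big1 ?addr0 // => i hi.
by case: eqP => // E; move: hi; rewrite -val_eqE /= E eqxx.
Qed.

Lemma max_CDT (nA : L -> nat) t pi : (forall I, (0 < nA I)%N) -> is_strategy nA pi ->
  (forall pi', is_strategy nA pi' -> Uval pi' t <= Uval pi t) -> CDT_eq nA t pi.
Proof.
move=> hnA hpi hmax; split => //.
pose g I a := DD pi (ecoord I a) t.
pose lam I := mx (g I) (nA I).-1.
exists lam, (fun I a => lam I - g I a) => I a ha.
have glam : g I a <= lam I by apply: mx_ge; rewrite -ltnS prednK.
rewrite dU_DD; split; [by rewrite subr_ge0 | | by rewrite /g; ring].
have [p0|ppos] := eqVneq (pi I a) 0; first by rewrite p0 mulr0.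
have {ppos} ppos : 0 < pi I a by rewrite lt_def ppos (hpi I).1.
have [m hm lamE] := mx_ex (g I) (nA I).-1.
have hm' : (m < nA I)%N by rewrite -(prednK (hnA I)) ltnS.
suff : g I m <= g I a.
  rewrite -lamE => h; have -> : lam I = g I a by apply/eqP; rewrite eq_le h glam.
  by rewrite subrr mul0r.
have [->|mna] := eqVneq m a; first by [].
rewrite -subr_le0.
pose de : strat R L := fun J b => ecoord I m J b - ecoord I a J b.
have E0 : saff pi de 0 = pi.
  by apply/funext => J; apply/funext => b; rewrite /saff mul0r addr0.
have HD := Uval_derive t pi de 0.
rewrite E0 DD_sub in HD.
apply: (rmax_deriv ppos HD) => h /andP[h0 hlt].
rewrite addr0 E0; apply: hmax => J; split.
- move=> b hb; rewrite /saff /de /ecoord.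
  case: (J =P I) => [eJ|] /=; last by move=> _; rewrite subrr mulr0 addr0; exact: (hpi J).1 b hb.
  subst J.
  case: (b =P m) => [bm|_]; case: (b =P a) => [ba|_] /=.
  + by move: mna; rewrite -bm -ba eqxx.
  + by rewrite subr0 mulr1 addr_ge0 ?(ltW h0) // (hpi I).1.
  + by rewrite sub0r mulrN1 ba subr_ge0 ltW.
  + by rewrite subrr mulr0 addr0; exact: (hpi I).1 _ hb.
- rewrite /saff /de /ecoord; case: (J =P I) => [->|_] /=; last first.
    by under eq_bigr do rewrite subrr mulr0 addr0; exact: (hpi J).2.
  rewrite big_split /= (hpi I).2 -mulr_sumr sumrB.
  by rewrite !sum_ecoord // subrr mulr0 addr0.
Qed.

Lemma max_EDT (nA : L -> nat) t pi : is_strategy nA pi ->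
  (forall pi', is_strategy nA pi' -> Uval pi' t <= Uval pi t) -> EDT_eq nA t pi.
Proof.
move=> hpi hmax; split => // I s hs.
have -> : upd pi I (pi I) = pi.
  by apply/funext => J; rewrite /upd; case: eqP => [->|].
rewrite !U_Uval; apply: hmax => J; rewrite /upd; case: eqP => [->|] //.
Qed.

End D.

End Part2.
Import Part2.

Module Part3.
Import numFieldNormedType.Exports.
Local Open Scope ring_scope.
Local Open Scope classical_set_scope.

Section E.
Variable R : realType.
Variable L : eqType.

Lemma cont_sum (T : topologicalType) (I : Type) (r : seq I) (F : I -> T -> R) :
  (forall i, continuous (F i)) -> continuous (fun v => \sum_(i <- r) F i v).
Proof.
move=> hF; elim: r => [|i r IH].
  by under eq_fun do rewrite big_nil; exact: cst_continuous.
under eq_fun do rewrite big_cons.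
by move=> x; apply: cvgD; [exact: hF | exact: IH].
Qed.

Lemma Uval_cont (T : topologicalType) (s : T -> strat R L) (t : tree R L) :
  (forall I a, continuous (fun v => s v I a)) -> continuous (fun v => Uval (s v) t).
Proof.
move=> hs; elim/tree_ind2: t => [u|In ch IH|ch IH].
- exact: cst_continuous.
- suff H : forall k, continuous (fun v => UvP (s v) In k ch) by exact: H 0%N.
  elim: ch IH => [|c l IHl] /=; first by move=> _ k; exact: cst_continuous.
  case=> IHc IH k x; apply: cvgD; last exact: IHl.
  by apply: cvgM; [exact: hs | exact: IHc].
- suff H : continuous (fun v => UvC (s v) ch) by exact: H.
  elim: ch IH => [|[p c] l IHl] /=; first by move=> _; exact: cst_continuous.
  case=> IHc IH x; apply: cvgD; last exact: IHl.
  by apply: cvgM; [exact: cst_continuous | exact: IHc].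
Qed.


Section Param.
Variables (nA : L -> nat) (t : tree R L).
Hypotheses (hnA : forall I, (0 < nA I)%N) (hwf : wf_tree nA t).
Let S := undup (labs t).
Let M := \max_(I <- S) nA I.
Let N := (size S * M)%N.

Definition idx I a : 'I_N.+1 := inord (index I S * M + a).
Definition pv (v : 'rV[R]_N.+1) : strat R L := fun I a =>
  if I \in S then (if (a < nA I)%N then v ord0 (idx I a) else 0)
  else (if a == 0%N then 1 else 0).
Definition K := [set v : 'rV[R]_N.+1 | (forall i, `[0, 1] (v ord0 i)) /\
  (forall I, I \in S -> \sum_(a < nA I) v ord0 (idx I a) = 1)].

Lemma nA_M I : I \in S -> (nA I <= M)%N.
Proof. by move=> hI; apply: (@leq_bigmax_seq _ S xpredT nA I). Qed.

Lemma idx_val I a : I \in S -> (a < nA I)%N -> nat_of_ord (idx I a) = (index I S * M + a)%N.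
Proof.
move=> hI ha; rewrite /idx inordK //.
have h1 := nA_M hI; have h2 : (index I S < size S)%N by rewrite index_mem.
rewrite /N; nia.
Qed.

Lemma pv_strat v : K v -> is_strategy nA (pv v).
Proof.
move=> [hb hs] I; rewrite /pv; case hI: (I \in S); split.
- by move=> a ha; rewrite ha; have := hb (idx I a); rewrite /= in_itv /= => /andP[].
- by rewrite -(hs I hI); apply: eq_bigr => a _; rewrite ltn_ord.
- by move=> a _; case: eqP.
- exact: sum_ecoord.
Qed.

Lemma le_sum1 (pi : strat R L) I a : is_dist (nA I) (pi I) -> (a < nA I)%N ->
  0 <= pi I a <= 1.
Proof.
move=> [h0 h1] ha; rewrite h0 //= -h1 (bigD1 (Ordinal ha)) //= lerDl.
by apply: sumr_ge0 => i _; apply: h0.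
Qed.

Lemma K_cover pi : is_strategy nA pi -> exists v, K v /\
  forall I, I \in labs t -> forall a, (a < nA I)%N -> pv v I a = pi I a.
Proof.
move=> hpi.
case hS: S => [|x0 S'].
  exists 0; split; last by move=> I; rewrite -mem_undup -/S hS.
  split; first by move=> i; rewrite /= mxE in_itv /= lexx ler01.
  by move=> I; rewrite hS.
pose f (k : nat) : R := let j := (k %/ M)%N in let a := (k %% M)%N in
  if (j < size S)%N then (let I := nth x0 S j in if (a < nA I)%N then pi I a else 0) else 0.
have fE : forall I a, I \in S -> (a < nA I)%N -> f (index I S * M + a)%N = pi I a.
  move=> I a hI ha; have hM := nA_M hI.
  have Mpos : (0 < M)%N by apply: leq_trans hM; exact: leq_ltn_trans ha.
  rewrite /f divnMDl // modnMDl (divn_small (leq_trans ha hM)) addn0.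
  by rewrite (modn_small (leq_trans ha hM)) index_mem hI nth_index // ha.
exists (\row_i f (nat_of_ord i)); split; last first.
  move=> I hI a ha; have hIS : I \in S by rewrite mem_undup.
  by rewrite /pv hIS ha mxE idx_val // fE.
split.
- move=> i; rewrite /= mxE /f /=; case: ifP => _ //=; last by rewrite in_itv /= lexx ler01.
  case: ifP => ha; last by rewrite in_itv /= lexx ler01.
  by rewrite in_itv /=; apply: le_sum1.
- move=> I hI; rewrite -(hpi I).2; apply: eq_bigr => a _.
  by rewrite mxE idx_val // fE.
Qed.

Lemma compact_K : compact K.
Proof.
have -> : K = [set v : 'rV[R]_N.+1 | forall i, `[0, 1] (v ord0 i)] `&`
   \bigcap_(I in [set I | I \in S]) [set v : 'rV[R]_N.+1 | \sum_(a < nA I) v ord0 (idx I a) = 1].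
  by apply/seteqP; split => v [h1 h2]; split.
apply: compact_closedI; first exact: (@rV_compact R N.+1 (fun=> `[0, 1]) (fun=> @segment_compact R 0 1)).
apply: closed_bigI => I _.
have cs : continuous (fun v : 'rV[R]_N.+1 => \sum_(a < nA I) v ord0 (idx I a)).
  by apply: cont_sum => a; exact: coord_continuous.
have := @preimage_closed _ _ _ [set x : R | x = 1] (fun x _ => cs x) (@closed_eq _ 1).
by [].
Qed.

Lemma exists_max : exists pi, is_strategy nA pi /\
  forall pi', is_strategy nA pi' -> Uval pi' t <= Uval pi t.
Proof.
pose pi0 : strat R L := fun I a => if a == 0%N then 1 else 0.
have hpi0 : is_strategy nA pi0.
  move=> I; split; first by move=> a _; rewrite /pi0; case: eqP.
  exact: sum_ecoord.
have [v0 [Kv0 _]] := K_cover hpi0.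
have cf : continuous (fun v => Uval (pv v) t).
  apply: Uval_cont => I a; rewrite /pv.
  case: (I \in S); last exact: cst_continuous.
  case: (a < nA I)%N; last exact: cst_continuous.
  exact: coord_continuous.
have [c cK cmax] := compact_EVT_max (ex_intro _ v0 Kv0) compact_K (continuous_subspaceT cf).
have Kc : K c by rewrite inE in cK.
exists (pv c); split; first exact: pv_strat.
move=> pi' hpi'; have [v [Kv agr]] := K_cover hpi'.
rewrite -(Uval_agree hwf agr); apply: cmax; by rewrite inE.
Qed.

End Param.
End E.

End Part3.
Import Part3.

Lemma val_eq (R : realType) (L : Type) (SC : strat R L -> Prop) (t : tree R L) pis :
  SC pis -> (forall pi, SC pi -> U t pi <= U t pis) -> Defs.val SC t = U t pis.
Proof.
move=> hs hle; rewrite /Defs.val; apply/eqP; rewrite eq_le; apply/andP; split.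
  apply: ge_sup; first by exists (U t pis), pis.
  by move=> x [pi [hpi ->]]; exact: hle.
apply: sup_upper_bound; last by exists pis.
split; first by exists (U t pis), pis.
by exists (U t pis) => x [pi [hpi ->]]; exact: hle.
Qed.

Lemma game_vals (R : realType) (L : eqType) (nA : L -> nat) (t : tree R L) :
  (forall I, (0 < nA I)%N) -> wf_tree nA t ->
  exists m, [/\ opt_val nA t = m, bEDT_val nA t = m, bCDT_val nA t = m &
    exists2 pis, is_strategy nA pis & Uval pis t = m /\
    forall pi, is_strategy nA pi -> Uval pi t <= m].
Proof.
move=> hnA hwf; have [pis [hs hmax]] := exists_max hnA hwf.
exists (Uval pis t); split.
- rewrite /opt_val (val_eq (pis := pis)) ?U_Uval // => pi hpi.
  by rewrite !U_Uval; exact: hmax.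
- rewrite /bEDT_val (val_eq (pis := pis)) ?U_Uval //; first exact: max_EDT.
  by move=> pi [hpi _]; rewrite !U_Uval; exact: hmax.
- rewrite /bCDT_val (val_eq (pis := pis)) ?U_Uval //; first exact: max_CDT.
  by move=> pi [hpi _]; rewrite !U_Uval; exact: hmax.
- by exists pis.
Qed.

Theorem proposition3 (R : realType) (L : eqType) (nA : L -> nat)
  (t : tree R L)
  (hnA : forall I, (0 < nA I)%N)
  (hwf : wf_tree nA t)
  (hpos : 0 < opt_val nA t) :
  VoR_opt nA t = VoR_bEDT nA t /\ VoR_bEDT nA t = VoR_bCDT nA t /\
  1 <= VoR_bCDT nA t.
Proof.
have [m0 [o0 e0 c0 [pis0 hs0 [Em0 _]]]] := game_vals hnA hwf.
have hnA' : forall J : L * seq (L * nat), (0 < pr1_nA nA J)%N by move=> J; exact: hnA.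
have [m1 [o1 e1 c1 [_ _ [_ hm1]]]] := game_vals hnA' (wf_pr1 [::] hwf).
rewrite /VoR_opt /VoR_bEDT /VoR_bCDT o0 e0 c0 o1 e1 c1; split => //; split => //.
rewrite o0 in hpos; rewrite ler_pdivlMr // mul1r -Em0.
rewrite -(Uval_pr1 t [::] pis0); apply: hm1 => J; exact: hs0.
Qed.
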